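(* Let $L\ge1$, $\delta>0$, $\lambda^0\in(0,\infty)^L$, continuous strictly increasing $c_1,\dots,c_L:[0,\infty)\to\mathbb{R}$, and for $m\in\mathbb{N}$ let $f_m,g_m:[0,\infty)^L\to\mathbb{R}$ be $$f_m(\beta)=\sum_{i=1}^L c_i(\beta_i)+\delta\Big(1-\prod_{i=1}^L\big(1-\tilde\alpha(\beta_i,m\lambda^0_i)\big)\Big),\quad g_m(\beta)=\sum_{i=1}^L c_i(\beta_i)+\delta\Big(1-\prod_{i=1}^L\big(1-UB(\beta_i,m\lambda^0_i)\big)\Big).$$ Suppose $\beta^F_m$ minimizes $f_m$ over $[0,\infty)^L$ and $\beta^G_m$ minimizes $g_m$ over $[0,\infty)^L$. Then $$\lim_{m\to\infty}\big(f_m(\beta^G_m)-f_m(\beta^F_m)\big)=0.$$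
   Context: $\phi,\Phi$ are the standard normal density and distribution function. For $\lambda>0$ and real $n\ge 0$, $\bar\alpha(n,\lambda)=\min\Big\{1,\big[\lambda\int_0^\infty t e^{-\lambda t}(1+t)^{n-1}\,dt\big]^{-1}\Big\}$ is the continuous Erlang-C function, and $\tilde\alpha(\beta,\lambda)=\bar\alpha(\lambda+\beta\sqrt\lambda,\lambda)$. For $\lambda>0,\beta\ge 0$ set $n=\lambda+\beta\sqrt{\lambda}$, $\rho=\lambda/n$, $a=\sqrt{-2n(1-\rho+\ln\rho)}$, $\gamma=(n-\lambda)/\sqrt{n}$, and $UB(\beta,\lambda)=\left[\rho+\gamma\left(\frac{\Phi(a)}{\phi(a)}+\frac{2}{3\sqrt{n}}\right)\right]^{-1}$. It is known (Janssen, van Leeuwaarden and Zwart) that $\tilde\alpha(\beta,\lambda)\le UB(\beta,\lambda)$ for all $\lambda,\beta>0$. *)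

(* Defs.v *)
From Stdlib Require Import Reals Lra ClassicalEpsilon.
Open Scope R_scope.

Definition is_int_to_inf (f : R -> R) (a I : R) : Prop :=
  forall eps : R, 0 < eps -> exists B : R, forall b : R, B <= b ->
    exists pr : Riemann_integrable f a b, Rabs (RiemannInt pr - I) < eps.

Definition is_int_from_minf (f : R -> R) (a I : R) : Prop :=
  forall eps : R, 0 < eps -> exists B : R, forall b : R, b <= B ->
    exists pr : Riemann_integrable f b a, Rabs (RiemannInt pr - I) < eps.

Definition int_to_inf (f : R -> R) (a : R) : R :=
  epsilon (inhabits 0) (fun I => is_int_to_inf f a I).
Definition int_from_minf (f : R -> R) (a : R) : R :=
  epsilon (inhabits 0) (fun I => is_int_from_minf f a I).

Definition phi (x : R) : R := exp (- (x * x) / 2) / sqrt (2 * PI).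
Definition Phi (x : R) : R := int_from_minf phi x.

(* continuous Erlang-C function  alpha_bar(n, lambda) *)
Definition alpha_bar (n lam : R) : R :=
  Rmin 1 (/ (lam * int_to_inf (fun t => t * exp (- lam * t) * Rpower (1 + t) (n - 1)) 0)).

Definition alpha_tilde (beta lam : R) : R := alpha_bar (lam + beta * sqrt lam) lam.

Definition UB (beta lam : R) : R :=
  let n := lam + beta * sqrt lam in
  let rho := lam / n in
  let a := sqrt (- 2 * n * (1 - rho + ln rho)) in
  let gam := (n - lam) / sqrt n in
  / (rho + gam * (Phi a / phi a + 2 / (3 * sqrt n))).

(* finite sum / product over indices 0 .. L-1 *)
Fixpoint sumL (L : nat) (f : nat -> R) : R :=
  match L with O => 0 | S k => sumL k f + f k end.
Fixpoint prodL (L : nat) (f : nat -> R) : R :=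
  match L with O => 1 | S k => prodL k f * f k end.

Definition f_obj (L : nat) (c : nat -> R -> R) (delta : R) (lam0 : nat -> R)
  (m : nat) (beta : nat -> R) : R :=
  sumL L (fun i => c i (beta i))
  + delta * (1 - prodL L (fun i => 1 - alpha_tilde (beta i) (INR m * lam0 i))).

Definition g_obj (L : nat) (c : nat -> R -> R) (delta : R) (lam0 : nat -> R)
  (m : nat) (beta : nat -> R) : R :=
  sumL L (fun i => c i (beta i))
  + delta * (1 - prodL L (fun i => 1 - UB (beta i) (INR m * lam0 i))).

Definition nonneg_vec (L : nat) (beta : nat -> R) : Prop :=
  forall i, (i < L)%nat -> 0 <= beta i.

(* Main.v *)
Require Import Defs.
From Coquelicot Require Import Coquelicot.
From Stdlib Require Import Reals Lra Lia ClassicalEpsilon.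
Open Scope R_scope.

Definition LimP (F : R -> R) (I : R) : Prop :=
  forall eps, 0 < eps -> exists B, forall b, B <= b -> Rabs (F b - I) < eps.

Lemma LimP_le F G I J d : LimP F I -> LimP G J ->
  (exists c0, forall c, c0 <= c -> F c <= G c + d) -> I <= J + d.
Proof.
  intros HF HG [c0 Hc].
  destruct (Rle_dec I (J + d)) as [h|h]; [exact h|].
  set (e := (I - J - d) / 2).
  assert (He : 0 < e) by (unfold e; lra).
  destruct (HF e He) as [B1 H1]. destruct (HG e He) as [B2 H2].
  set (b := Rmax c0 (Rmax B1 B2)).
  assert (b1 : B1 <= b) by (unfold b; eapply Rle_trans; [|apply Rmax_r]; apply Rmax_l).
  assert (b2 : B2 <= b) by (unfold b; eapply Rle_trans; [|apply Rmax_r]; apply Rmax_r).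
  assert (b0 : c0 <= b) by (unfold b; apply Rmax_l).
  specialize (H1 b b1). specialize (H2 b b2). specialize (Hc b b0).
  apply Rabs_def2 in H1. apply Rabs_def2 in H2. unfold e in *. lra.
Qed.

Lemma LimP_unique F I J : LimP F I -> LimP F J -> I = J.
Proof.
  intros H1 H2.
  assert (I <= J + 0) by (apply (LimP_le F F I J 0 H1 H2); exists 0; intros; lra).
  assert (J <= I + 0) by (apply (LimP_le F F J I 0 H2 H1); exists 0; intros; lra).
  lra.
Qed.

Lemma is_int_of_LimP f a I : (forall b, a <= b -> ex_RInt f a b) ->
  LimP (fun b => RInt f a b) I -> is_int_to_inf f a I.
Proof.
  intros Hi HL eps He. destruct (HL eps He) as [B HB].
  exists (Rmax a B). intros b Hb.
  assert (ha : a <= b) by (eapply Rle_trans; [apply Rmax_l|exact Hb]).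
  assert (hB : B <= b) by (eapply Rle_trans; [apply Rmax_r|exact Hb]).
  exists (ex_RInt_Reals_0 f a b (Hi b ha)).
  rewrite <- RInt_Reals. apply HB; exact hB.
Qed.

Lemma LimP_of_is_int f a I : is_int_to_inf f a I -> LimP (fun b => RInt f a b) I.
Proof.
  intros H eps He. destruct (H eps He) as [B HB]. exists B. intros b Hb.
  destruct (HB b Hb) as [pr Hpr]. rewrite (RInt_Reals f a b pr). exact Hpr.
Qed.

Lemma int_to_inf_eq f a I : (forall b, a <= b -> ex_RInt f a b) ->
  LimP (fun b => RInt f a b) I -> int_to_inf f a = I.
Proof.
  intros Hi HL. unfold int_to_inf.
  assert (Hs : is_int_to_inf f a (epsilon (inhabits 0) (fun I => is_int_to_inf f a I))).
  { apply epsilon_spec. exists I. apply is_int_of_LimP; auto. }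
  apply LimP_of_is_int in Hs. exact (LimP_unique _ _ _ Hs HL).
Qed.

Lemma is_int_from_minf_of f a I : (forall b, b <= a -> ex_RInt f b a) ->
  (forall eps, 0 < eps -> exists B, forall b, b <= B -> Rabs (RInt f b a - I) < eps) ->
  is_int_from_minf f a I.
Proof.
  intros Hi HL eps He. destruct (HL eps He) as [B HB].
  exists (Rmin a B). intros b Hb.
  assert (ha : b <= a) by (eapply Rle_trans; [exact Hb|apply Rmin_l]).
  assert (hB : b <= B) by (eapply Rle_trans; [exact Hb|apply Rmin_r]).
  exists (ex_RInt_Reals_0 f b a (Hi b ha)).
  rewrite <- RInt_Reals. apply HB; exact hB.
Qed.

Lemma int_from_minf_eq f a I : (forall b, b <= a -> ex_RInt f b a) ->
  (forall eps, 0 < eps -> exists B, forall b, b <= B -> Rabs (RInt f b a - I) < eps) ->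
  int_from_minf f a = I.
Proof.
  intros Hi HL. unfold int_from_minf.
  assert (Hs : is_int_from_minf f a (epsilon (inhabits 0) (fun I => is_int_from_minf f a I))).
  { apply epsilon_spec. exists I. apply is_int_from_minf_of; auto. }
  set (J := epsilon _ _) in *.
  destruct (Req_dec I J) as [h|h]; [auto|exfalso].
  set (e := Rabs (I - J) / 2).
  assert (He : 0 < e) by (unfold e; assert (0 < Rabs (I - J)) by (apply Rabs_pos_lt; lra); lra).
  destruct (HL e He) as [B1 H1]. destruct (Hs e He) as [B2 H2].
  set (b := Rmin B1 B2).
  destruct (H2 b (Rmin_r _ _)) as [pr Hpr].
  specialize (H1 b (Rmin_l _ _)). rewrite (RInt_Reals f b a pr) in H1.
  unfold e in *.
  assert (Rabs (I - J) <= Rabs (RiemannInt pr - I) + Rabs (RiemannInt pr - J)).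
  { replace (I - J) with (-(RiemannInt pr - I) + (RiemannInt pr - J)) by ring.
    eapply Rle_trans; [apply Rabs_triang|]. rewrite Rabs_Ropp. lra. }
  lra.
Qed.

Lemma cont_of_ex_derive (f : R -> R) x : ex_derive f x -> continuous f x.
Proof. intro H. exact (@ex_derive_continuous R_AbsRing R_NormedModule f x H). Qed.

Lemma nonneg_from_deriv (f df : R -> R) :
  (forall x, 0 <= x -> is_derive f x (df x)) -> (forall x, 0 <= x -> 0 <= df x) ->
  forall x, 0 <= x -> f 0 <= f x.
Proof.
  intros Hd Hp x Hx.
  destruct (Req_dec x 0) as [->|hx]; [lra|].
  destruct (MVT_gen f 0 x df) as [c [Hc Heq]].
  - intros y Hy. apply Hd. rewrite Rmin_left in Hy; lra.
  - intros y Hy. apply continuity_pt_filterlim. apply cont_of_ex_derive.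
    exists (df y). apply Hd. rewrite Rmin_left in Hy; lra.
  - rewrite Rmin_left in Hc by lra. rewrite Rmax_right in Hc by lra.
    assert (0 <= df c) by (apply Hp; lra).
    assert (0 <= df c * (x - 0)) by (apply Rmult_le_pos; lra). lra.
Qed.

Lemma ex_RInt_cont (f : R -> R) a b : (forall x, Rmin a b <= x <= Rmax a b -> continuous f x) -> ex_RInt f a b.
Proof. intro H. exact (@ex_RInt_continuous R_CompleteNormedModule f a b H). Qed.

Lemma RInt_exp_dec C k c d : 0 < k -> c <= d ->
  RInt (fun x => C * exp (- k * x)) c d = C / k * (exp (- k * c) - exp (- k * d)).
Proof.
  intros Hk Hcd.
  assert (H := is_RInt_derive (fun x => - (C / k) * exp (- k * x)) (fun x => C * exp (- k * x)) c d).
  apply is_RInt_unique in H.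
  - rewrite H. unfold minus, plus, opp; simpl. field. lra.
  - intros x _. auto_derive; auto. field. lra.
  - intros x _. apply cont_of_ex_derive. auto_derive. auto.
Qed.

Lemma RInt_mono_nonneg (f : R -> R) c d : 0 <= c <= d ->
  (forall x, 0 <= x -> continuous f x) -> (forall x, 0 <= x -> 0 <= f x) ->
  RInt f 0 c <= RInt f 0 d.
Proof.
  intros Hcd Hc Hp.
  assert (E1 : ex_RInt f 0 c) by (apply ex_RInt_cont; intros; apply Hc; rewrite Rmin_left in *; lra).
  assert (E2 : ex_RInt f c d) by (apply ex_RInt_cont; intros; apply Hc; rewrite Rmin_left in *; lra).
  rewrite <- (RInt_Chasles f 0 c d E1 E2).
  assert (0 <= RInt f c d) by (apply RInt_ge_0; auto; [lra|intros; apply Hp; lra]).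
  unfold plus; simpl. lra.
Qed.

Lemma RInt_tail_le (f : R -> R) C k a0 c d : 0 < k -> 0 <= C -> 0 <= a0 -> a0 <= c <= d ->
  (forall x, 0 <= x -> continuous f x) ->
  (forall x, a0 <= x -> f x <= C * exp (- k * x)) ->
  RInt f 0 d <= RInt f 0 c + C / k * exp (- k * c).
Proof.
  intros Hk HC Ha Hcd Hc Hb.
  assert (E1 : ex_RInt f 0 c) by (apply ex_RInt_cont; intros; apply Hc; rewrite Rmin_left in *; lra).
  assert (E2 : ex_RInt f c d) by (apply ex_RInt_cont; intros; apply Hc; rewrite Rmin_left in *; lra).
  rewrite <- (RInt_Chasles f 0 c d E1 E2). unfold plus; simpl.
  assert (RInt f c d <= RInt (fun x => C * exp (- k * x)) c d).
  { apply RInt_le; auto; [lra| |intros; apply Hb; lra].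
    apply ex_RInt_cont. intros. apply cont_of_ex_derive. auto_derive. auto. }
  rewrite RInt_exp_dec in H by lra.
  assert (0 <= C / k * exp (- k * d) \/ C / k * exp (- k * d) < 0) by lra.
  assert (0 <= C / k * exp (- k * d)).
  { apply Rmult_le_pos; [apply Rdiv_le_0_compat; lra|left; apply exp_pos]. }
  lra.
Qed.

Lemma exp_big k C eps : 0 < k -> 0 <= C -> 0 < eps -> forall a0, exists b, a0 <= b /\ 0 <= b /\
  forall c, b <= c -> C / k * exp (- k * c) < eps.
Proof.
  intros Hk HC He a0.
  set (b := Rmax (Rmax a0 0) ((C + 1) / (eps * k * k))).
  exists b. split; [unfold b; eapply Rle_trans; [apply Rmax_l|apply Rmax_l]|].
  split; [unfold b; eapply Rle_trans; [apply Rmax_r|apply Rmax_l]|].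
  intros c Hc.
  assert (Hb : (C + 1) / (eps * k * k) <= c) by (eapply Rle_trans; [apply Rmax_r|exact Hc]).
  assert (Hkc : (C + 1) / (eps * k) <= k * c).
  { apply (Rmult_le_compat_l k) in Hb; [|lra].
    replace (k * ((C + 1) / (eps * k * k))) with ((C + 1) / (eps * k)) in Hb by (field; lra). exact Hb. }
  assert (He1 := exp_ineq1_le (k * c)).
  assert (Hpos : 0 < exp (k * c)) by apply exp_pos.
  replace (- k * c) with (- (k * c)) by ring. rewrite exp_Ropp.
  assert (Hgt : (C + 1) / (eps * k) < exp (k * c)) by lra.
  apply (Rmult_lt_reg_r (exp (k * c) * k)). { apply Rmult_lt_0_compat; lra. }
  replace (C / k * / exp (k * c) * (exp (k * c) * k)) with C by (field; lra).
  apply (Rmult_lt_compat_l (eps * k)) in Hgt; [|apply Rmult_lt_0_compat; lra].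
  replace (eps * k * ((C + 1) / (eps * k))) with (C + 1) in Hgt by (field; lra).
  nra.
Qed.

Lemma conv_exp (f : R -> R) a0 C k : 0 <= a0 -> 0 < k -> 0 <= C ->
  (forall x, 0 <= x -> continuous f x) -> (forall x, 0 <= x -> 0 <= f x) ->
  (forall x, a0 <= x -> f x <= C * exp (- k * x)) ->
  exists I, LimP (fun c => RInt f 0 c) I /\ (forall c, 0 <= c -> RInt f 0 c <= I)
   /\ (forall c, a0 <= c -> I <= RInt f 0 c + C / k * exp (- k * c)).
Proof.
  intros Ha Hk HC Hc Hp Hb.
  set (E := fun y => exists c, 0 <= c /\ y = RInt f 0 c).
  assert (Hub : forall c, a0 <= c -> forall c', 0 <= c' -> RInt f 0 c' <= RInt f 0 c + C / k * exp (- k * c)).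
  { intros c Hc0 c' Hc'. destruct (Rle_dec c' c).
    - assert (0 <= C / k * exp (- k * c)) by (apply Rmult_le_pos; [apply Rdiv_le_0_compat; lra|left; apply exp_pos]).
      assert (RInt f 0 c' <= RInt f 0 c) by (apply RInt_mono_nonneg; auto; lra). lra.
    - apply (RInt_tail_le f C k a0); auto; lra. }
  destruct (completeness E) as [I [HI1 HI2]].
  { exists (RInt f 0 a0 + C / k * exp (- k * a0)). intros y [c [Hc0 ->]]. apply Hub; lra. }
  { exists (RInt f 0 0). exists 0. split; lra. }
  assert (Hle : forall c, 0 <= c -> RInt f 0 c <= I) by (intros c Hc0; apply HI1; exists c; split; auto).
  assert (Hge : forall c, a0 <= c -> I <= RInt f 0 c + C / k * exp (- k * c)).
  { intros c Hc0. apply HI2. intros y [c' [Hc' ->]]. apply Hub; auto. }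
  exists I. split; [|split; auto].
  intros eps He. destruct (exp_big k C eps Hk HC He a0) as [b [Hb1 [Hb2 Hb3]]].
  exists b. intros c Hcb.
  assert (h1 := Hle c ltac:(lra)). assert (h2 := Hge c ltac:(lra)). assert (h3 := Hb3 c Hcb).
  rewrite Rabs_left1 by lra. lra.
Qed.

Lemma ln_le_x x : 0 <= x -> ln (1 + x) <= x.
Proof.
  intro Hx. assert (H := nonneg_from_deriv (fun x => x - ln (1 + x)) (fun x => 1 - / (1 + x))).
  simpl in H. rewrite Rplus_0_r, ln_1 in H.
  assert (0 - 0 <= x - ln (1 + x)); [|lra].
  apply H; auto.
  - intros y Hy. auto_derive; [lra|]. field; lra.
  - intros y Hy. assert (/ (1 + y) <= 1); [|lra].
    rewrite <- Rinv_1. apply Rinv_le_contravar; lra.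
Qed.

Lemma ln_ge_2 x : 0 <= x -> x - x * x / 2 <= ln (1 + x).
Proof.
  intro Hx. assert (H := nonneg_from_deriv (fun x => ln (1 + x) - (x - x * x / 2)) (fun x => x * x / (1 + x))).
  simpl in H. rewrite Rplus_0_r, ln_1 in H.
  assert (0 - (0 - 0 * 0 / 2) <= ln (1 + x) - (x - x * x / 2)); [|lra].
  apply H; auto.
  - intros y Hy. auto_derive; [lra|]. field; lra.
  - intros y Hy. apply Rdiv_le_0_compat; nra.
Qed.

Lemma ln_le_3 x : 0 <= x -> ln (1 + x) <= x - x * x / 2 + x * x * x / 3.
Proof.
  intro Hx. assert (H := nonneg_from_deriv (fun x => x - x * x / 2 + x * x * x / 3 - ln (1 + x)) (fun x => x * x * x / (1 + x))).
  simpl in H. rewrite Rplus_0_r, ln_1 in H.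
  assert (0 - 0 * 0 / 2 + 0 * 0 * 0 / 3 - 0 <= x - x * x / 2 + x * x * x / 3 - ln (1 + x)); [|lra].
  apply H; auto.
  - intros y Hy. auto_derive; [lra|]. field; lra.
  - intros y Hy. apply Rdiv_le_0_compat; [|lra]. repeat apply Rmult_le_pos; lra.
Qed.

Lemma ln_le_frac x : 0 <= x -> ln (1 + x) <= x - x * x / (2 * (1 + x)).
Proof.
  intro Hx. assert (H := nonneg_from_deriv (fun x => x - x * x / (2 * (1 + x)) - ln (1 + x)) (fun x => x * x / (2 * ((1 + x) * (1 + x))))).
  simpl in H. rewrite Rplus_0_r, ln_1 in H.
  assert (0 - 0 * 0 / (2 * 1) - 0 <= x - x * x / (2 * (1 + x)) - ln (1 + x)); [|lra].
  apply H; auto.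
  - intros y Hy. auto_derive; [lra|]. field; lra.
  - intros y Hy. apply Rdiv_le_0_compat; nra.
Qed.

Lemma h_upper u : 0 <= u -> (1 + u) * ln (1 + u) - u <= u * u / 2.
Proof.
  intro Hx. assert (H := nonneg_from_deriv (fun u => u * u / 2 - ((1 + u) * ln (1 + u) - u)) (fun u => u - ln (1 + u))).
  simpl in H. rewrite Rplus_0_r, ln_1 in H.
  assert (0 * 0 / 2 - (1 * 0 - 0) <= u * u / 2 - ((1 + u) * ln (1 + u) - u)); [|lra].
  apply H; auto.
  - intros y Hy. auto_derive; [lra|]. field; lra.
  - intros y Hy. assert (ln (1 + y) <= y) by (apply ln_le_x; lra). lra.
Qed.

Lemma h_lower u : 0 <= u -> u * u / 2 - u * u * u / 6 <= (1 + u) * ln (1 + u) - u.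
Proof.
  intro Hx. assert (H := nonneg_from_deriv (fun u => ((1 + u) * ln (1 + u) - u) - (u * u / 2 - u * u * u / 6)) (fun u => ln (1 + u) - (u - u * u / 2))).
  simpl in H. rewrite Rplus_0_r, ln_1 in H.
  assert ((1 * 0 - 0) - (0 * 0 / 2 - 0 * 0 * 0 / 6) <= ((1 + u) * ln (1 + u) - u) - (u * u / 2 - u * u * u / 6)); [|lra].
  apply H; auto.
  - intros y Hy. auto_derive; [lra|]. field; lra.
  - intros y Hy. assert (y - y * y / 2 <= ln (1 + y)) by (apply ln_ge_2; lra). lra.
Qed.

Lemma ln_le_k y k : 0 < y -> 0 < k -> ln y <= y / k + ln k - 1.
Proof.
  intros Hy Hk.
  assert (Hik : 0 < / k) by (apply Rinv_0_lt_compat; lra).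
  assert (Hyk : 0 < y * / k) by (apply Rmult_lt_0_compat; lra).
  assert (H := exp_ineq1_le (ln (y * / k))). rewrite exp_ln in H by exact Hyk.
  rewrite (ln_mult y (/ k) Hy Hik), (ln_Rinv k Hk) in H. unfold Rdiv. lra.
Qed.

Lemma conv_int (f : R -> R) a0 C k : 0 <= a0 -> 0 < k -> 0 <= C ->
  (forall x, 0 <= x -> continuous f x) -> (forall x, 0 <= x -> 0 <= f x) ->
  (forall x, a0 <= x -> f x <= C * exp (- k * x)) ->
  LimP (fun c => RInt f 0 c) (int_to_inf f 0) /\ (forall c, 0 <= c -> RInt f 0 c <= int_to_inf f 0)
   /\ (forall c, a0 <= c -> int_to_inf f 0 <= RInt f 0 c + C / k * exp (- k * c)).
Proof.
  intros Ha Hk HC Hc Hp Hb.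
  destruct (conv_exp f a0 C k Ha Hk HC Hc Hp Hb) as [I [H1 [H2 H3]]].
  rewrite (int_to_inf_eq f 0 I); auto.
  intros b Hb0. apply ex_RInt_cont. intros. apply Hc. rewrite Rmin_left in *; lra.
Qed.

Lemma LimP_approx F H I : LimP F I ->
  (forall eps, 0 < eps -> exists B, forall c, B <= c -> Rabs (H c - F c) < eps) -> LimP H I.
Proof.
  intros HF HH eps He.
  destruct (HF (eps/2) ltac:(lra)) as [B1 H1]. destruct (HH (eps/2) ltac:(lra)) as [B2 H2].
  exists (Rmax B1 B2). intros b Hb.
  specialize (H1 b (Rle_trans _ _ _ (Rmax_l _ _) Hb)). specialize (H2 b (Rle_trans _ _ _ (Rmax_r _ _) Hb)).
  replace (H b - I) with ((H b - F b) + (F b - I)) by ring.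
  eapply Rle_lt_trans; [apply Rabs_triang|]. lra.
Qed.

Lemma LimP_affine F I u v : LimP F I -> LimP (fun c => u + v * F c) (u + v * I).
Proof.
  intros HF eps He.
  destruct (HF (eps / (Rabs v + 1))) as [B HB].
  { apply Rdiv_lt_0_compat; [lra|]. assert (0 <= Rabs v) by apply Rabs_pos. lra. }
  exists B. intros b Hb. specialize (HB b Hb).
  replace (u + v * F b - (u + v * I)) with (v * (F b - I)) by ring.
  rewrite Rabs_mult.
  assert (0 <= Rabs v) by apply Rabs_pos.
  assert (Rabs v * Rabs (F b - I) <= Rabs v * (eps / (Rabs v + 1))).
  { apply Rmult_le_compat_l; lra. }
  assert (Rabs v * (eps / (Rabs v + 1)) < eps).
  { apply (Rmult_lt_reg_r (Rabs v + 1)); [lra|]. unfold Rdiv.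
    replace (Rabs v * (eps * / (Rabs v + 1)) * (Rabs v + 1)) with (Rabs v * eps) by (field; lra). nra. }
  lra.
Qed.

Lemma exp_le x y : x <= y -> exp x <= exp y.
Proof. intro H. destruct (Req_dec x y) as [->|h]; [lra|left; apply exp_increasing; lra]. Qed.

Definition gM (a s : R) : R := exp (a * s - s * s / 2).
Definition gN (b s : R) : R := s * exp (b * s - s * s / 2).
Definition Mf (a : R) : R := int_to_inf (gM a) 0.
Definition Nf (b : R) : R := int_to_inf (gN b) 0.

Lemma gM_cont a x : continuous (gM a) x.
Proof. apply cont_of_ex_derive. unfold gM. auto_derive. auto. Qed.
Lemma gN_cont a x : continuous (gN a) x.
Proof. apply cont_of_ex_derive. unfold gN. auto_derive. auto. Qed.

Lemma gM_bound a s : gM a s <= exp ((a + 1) * (a + 1) / 2) * exp (- (1) * s).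
Proof.
  unfold gM. rewrite <- exp_plus. apply exp_le.
  assert (0 <= (s - (a + 1)) * (s - (a + 1))) by apply Rle_0_sqr. lra.
Qed.

Lemma gN_bound b s : 0 <= s -> gN b s <= exp ((b + 2) * (b + 2) / 2) * exp (- (1) * s).
Proof.
  intro Hs. unfold gN.
  assert (s <= exp s) by (assert (H := exp_ineq1_le s); lra).
  apply Rle_trans with (exp s * exp (b * s - s * s / 2)).
  { apply Rmult_le_compat_r; [left; apply exp_pos|auto]. }
  rewrite <- !exp_plus. apply exp_le.
  assert (0 <= (s - (b + 2)) * (s - (b + 2))) by apply Rle_0_sqr. lra.
Qed.

Lemma LimP_plus F G I J : LimP F I -> LimP G J -> LimP (fun c => F c + G c) (I + J).
Proof.
  intros HF HG eps He.
  destruct (HF (eps/2) ltac:(lra)) as [B1 H1]. destruct (HG (eps/2) ltac:(lra)) as [B2 H2].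
  exists (Rmax B1 B2). intros b Hb.
  specialize (H1 b (Rle_trans _ _ _ (Rmax_l _ _) Hb)). specialize (H2 b (Rle_trans _ _ _ (Rmax_r _ _) Hb)).
  replace (F b + G b - (I + J)) with ((F b - I) + (G b - J)) by ring.
  eapply Rle_lt_trans; [apply Rabs_triang|]. lra.
Qed.

Lemma M_facts a : LimP (fun c => RInt (gM a) 0 c) (Mf a) /\ (forall c, 0 <= c -> RInt (gM a) 0 c <= Mf a).
Proof.
  destruct (conv_int (gM a) 0 (exp ((a + 1) * (a + 1) / 2)) 1) as [H1 [H2 _]]; auto; try lra.
  - left; apply exp_pos.
  - intros; apply gM_cont.
  - intros; unfold gM; left; apply exp_pos.
  - intros; apply gM_bound.
Qed.

Lemma N_facts b : LimP (fun c => RInt (gN b) 0 c) (Nf b) /\ (forall c, 0 <= c -> RInt (gN b) 0 c <= Nf b).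
Proof.
  destruct (conv_int (gN b) 0 (exp ((b + 2) * (b + 2) / 2)) 1) as [H1 [H2 _]]; auto; try lra.
  - left; apply exp_pos.
  - intros; apply gN_cont.
  - intros; unfold gN; apply Rmult_le_pos; [lra|left; apply exp_pos].
  - intros; apply gN_bound; lra.
Qed.

Lemma exRM a c d : ex_RInt (gM a) c d.
Proof. apply ex_RInt_cont. intros; apply gM_cont. Qed.
Lemma exRN a c d : ex_RInt (gN a) c d.
Proof. apply ex_RInt_cont. intros; apply gN_cont. Qed.

Lemma M_mono a a' : a <= a' -> Mf a <= Mf a'.
Proof.
  intro H. destruct (M_facts a) as [H1 _]. destruct (M_facts a') as [H2 _].
  replace (Mf a') with (Mf a' + 0) by ring. apply (LimP_le _ _ _ _ 0 H1 H2).
  exists 0. intros c Hc. rewrite Rplus_0_r. apply RInt_le; auto; try apply exRM.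
  intros x Hx. unfold gM. apply exp_le.
  assert (a * x <= a' * x) by (apply Rmult_le_compat_r; lra). lra.
Qed.

Lemma N_mono a a' : a <= a' -> Nf a <= Nf a'.
Proof.
  intro H. destruct (N_facts a) as [H1 _]. destruct (N_facts a') as [H2 _].
  replace (Nf a') with (Nf a' + 0) by ring. apply (LimP_le _ _ _ _ 0 H1 H2).
  exists 0. intros c Hc. rewrite Rplus_0_r. apply RInt_le; auto; try apply exRN.
  intros x Hx. unfold gN. apply Rmult_le_compat_l; [lra|]. apply exp_le.
  assert (a * x <= a' * x) by (apply Rmult_le_compat_r; lra). lra.
Qed.

Lemma exp_diff_le X Y : exp X - exp Y <= (X - Y) * exp X.
Proof.
  assert (H := exp_ineq1_le (Y - X)).
  replace (exp Y) with (exp X * exp (Y - X)) by (rewrite <- exp_plus; f_equal; ring).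
  assert (0 < exp X) by apply exp_pos.
  assert (exp X * (1 + (Y - X)) <= exp X * exp (Y - X)) by (apply Rmult_le_compat_l; lra).
  lra.
Qed.

Lemma ex_RInt_lin (f g : R -> R) u c d : ex_RInt f c d -> ex_RInt g c d ->
  ex_RInt (fun x => f x + u * g x) c d.
Proof.
  intros Hf Hg.
  assert (Hg' : ex_RInt (V := R_NormedModule) (fun x => scal u (g x)) c d) by (apply (@ex_RInt_scal R_NormedModule); exact Hg).
  exact (@ex_RInt_plus R_NormedModule f (fun x => scal u (g x)) c d Hf Hg').
Qed.
Lemma RInt_lin (f g : R -> R) u c d : ex_RInt f c d -> ex_RInt g c d ->
  RInt (fun x => f x + u * g x) c d = RInt f c d + u * RInt g c d.
Proof.
  intros Hf Hg.
  assert (Hg' : ex_RInt (V := R_NormedModule) (fun x => scal u (g x)) c d) by (apply (@ex_RInt_scal R_NormedModule); exact Hg).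
  assert (E := @RInt_plus R_CompleteNormedModule f (fun x => scal u (g x)) c d Hf Hg').
  assert (E2 := @RInt_scal R_CompleteNormedModule g c d u Hg).
  exact (eq_trans E (f_equal (plus (RInt f c d)) E2)).
Qed.

Lemma M_diff a b : a <= b -> Mf b <= Mf a + (b - a) * Nf b.
Proof.
  intro H. destruct (M_facts a) as [H1 _]. destruct (M_facts b) as [H2 _]. destruct (N_facts b) as [H3 _].
  assert (H4 : LimP (fun c => RInt (gM a) 0 c + (b - a) * RInt (gN b) 0 c) (Mf a + (b - a) * Nf b)).
  { apply (LimP_plus _ (fun c => (b - a) * RInt (gN b) 0 c)); auto.
    replace ((b - a) * Nf b) with (0 + (b - a) * Nf b) by ring.
    apply (LimP_affine _ _ 0 (b - a)) in H3. apply (LimP_approx _ _ _ H3).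
    intros eps He; exists 0; intros c _. rewrite Rplus_0_l, Rminus_eq_0, Rabs_R0; lra. }
  replace (Mf a + (b - a) * Nf b) with ((Mf a + (b - a) * Nf b) + 0) by ring.
  apply (LimP_le _ _ _ _ 0 H2 H4).
  exists 0. intros c Hc. rewrite Rplus_0_r.
  rewrite <- (RInt_lin (gM a) (gN b) (b - a) 0 c (exRM _ _ _) (exRN _ _ _)).
  apply RInt_le; [lra|apply exRM|apply ex_RInt_lin; [apply exRM|apply exRN]|].
  intros x Hx. unfold gM, gN. assert (Hd := exp_diff_le (b * x - x * x / 2) (a * x - x * x / 2)).
  replace (b * x - x * x / 2 - (a * x - x * x / 2)) with ((b - a) * x) in Hd by ring. lra.
Qed.

Lemma M0_ge : 1 / 2 <= Mf 0.
Proof.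
  destruct (M_facts 0) as [_ H]. eapply Rle_trans; [|apply (H 1); lra].
  apply Rle_trans with (RInt (fun _ => exp (- 1 / 2)) 0 1).
  - rewrite RInt_const. unfold scal; simpl; unfold mult; simpl.
    assert (h := exp_ineq1_le (- 1 / 2)). lra.
  - apply RInt_le; [lra|apply ex_RInt_const|apply exRM|].
    intros x Hx. unfold gM. apply exp_le.
      assert (x * x <= 1 * 1) by (apply Rmult_le_compat; lra). lra.
Qed.

Lemma RInt_scal_R (f : R -> R) u c d : ex_RInt f c d ->
  RInt (fun x => u * f x) c d = u * RInt f c d.
Proof. intro H. exact (@RInt_scal R_CompleteNormedModule f c d u H). Qed.

Lemma N_eq b : Nf b = 1 + b * Mf b.
Proof.
  assert (Hfin : forall c, 0 <= c -> RInt (gN b) 0 c = 1 - exp (b * c - c * c / 2) + b * RInt (gM b) 0 c).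
  { intros c Hc.
    assert (Hd := @is_RInt_derive R_CompleteNormedModule (fun x => - exp (b * x - x * x / 2))
                  (fun x => (x - b) * exp (b * x - x * x / 2)) 0 c).
    assert (Hex : ex_RInt (fun x => (x - b) * exp (b * x - x * x / 2)) 0 c).
    { apply ex_RInt_cont. intros. apply cont_of_ex_derive. auto_derive. auto. }
    assert (E1 : RInt (fun x => (x - b) * exp (b * x - x * x / 2)) 0 c = 1 - exp (b * c - c * c / 2)).
    { apply is_RInt_unique in Hd.
      - rewrite Hd. unfold minus, plus, opp; simpl. assert (E0 : b * 0 - 0 * 0 / 2 = 0) by field. rewrite E0, exp_0. ring.
      - intros x _. auto_derive; auto. match goal with |- ?u = ?v => change (@eq R u v) end. unfold Rminus, Rdiv. field.
      - intros x _. apply cont_of_ex_derive. auto_derive. auto. }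
    rewrite <- E1.
    rewrite <- (RInt_lin _ (gM b) b 0 c Hex (exRM _ _ _)).
    apply RInt_ext. intros x _. unfold gN, gM. match goal with |- ?u = ?v => change (@eq R u v) end. ring. }
  destruct (N_facts b) as [HN _]. destruct (M_facts b) as [HM _].
  apply (LimP_affine _ _ 1 b) in HM.
  apply (LimP_unique (fun c => RInt (gN b) 0 c)); auto.
  apply (LimP_approx _ _ _ HM).
  intros eps He.
  destruct (exp_big 1 (exp ((b + 1) * (b + 1) / 2)) eps ltac:(lra) ltac:(left; apply exp_pos) He 0) as [B [HB1 [HB2 HB3]]].
  exists B. intros c Hc. rewrite Hfin by lra.
  replace (1 - exp (b * c - c * c / 2) + b * RInt (gM b) 0 c - (1 + b * RInt (gM b) 0 c)) with (- exp (b * c - c * c / 2)) by ring.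
  rewrite Rabs_Ropp, Rabs_pos_eq by (left; apply exp_pos).
  assert (h := gM_bound b c). unfold gM in h. specialize (HB3 c Hc).
  replace (exp ((b + 1) * (b + 1) / 2) / 1) with (exp ((b + 1) * (b + 1) / 2)) in HB3 by field. lra.
Qed.

Lemma phi_pos a : 0 < phi a.
Proof.
  unfold phi. apply Rdiv_lt_0_compat; [apply exp_pos|]. apply sqrt_lt_R0.
  assert (H := PI_RGT_0). lra.
Qed.

Lemma phi_cont x : continuous phi x.
Proof. apply cont_of_ex_derive. unfold phi. auto_derive. exact I. Qed.

Lemma Phi_eq a : Phi a = phi a * Mf a.
Proof.
  unfold Phi.
  assert (Hfin : forall b, b <= a -> RInt phi b a = phi a * RInt (gM a) 0 (a - b)).
  { intros b Hb.
    assert (Hex : ex_RInt phi (-1 * 0 + a) (-1 * (a - b) + a)) by (apply ex_RInt_cont; intros; apply phi_cont).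
    assert (E := @RInt_comp_lin R_CompleteNormedModule phi (-1) a 0 (a - b) Hex).
    replace (-1 * 0 + a) with a in E by ring. replace (-1 * (a - b) + a) with b in E by ring.
    assert (Hex2 : ex_RInt phi b a) by (apply ex_RInt_cont; intros; apply phi_cont).
    rewrite <- (@opp_RInt_swap R_CompleteNormedModule phi b a Hex2) in E.
    match type of E with ?L = _ => assert (E3 : L = -1 * (phi a * RInt (gM a) 0 (a - b))) end.
    { transitivity (RInt (fun y => -1 * (phi a * gM a y)) 0 (a - b)).
      - apply RInt_ext. intros x _. unfold scal; simpl; unfold mult; simpl. unfold phi, gM.
        replace (- ((-1 * x + a) * (-1 * x + a)) / 2) with (- (a * a) / 2 + (a * x - x * x / 2)) by field.
        rewrite exp_plus. field. apply Rgt_not_eq. apply sqrt_lt_R0. assert (H := PI_RGT_0). lra.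
      - rewrite (RInt_scal_R (fun y => phi a * gM a y) (-1) 0 (a - b)).
        + rewrite (RInt_scal_R (gM a) (phi a) 0 (a - b) (exRM _ _ _)). reflexivity.
        + apply ex_RInt_cont. intros. apply cont_of_ex_derive. unfold gM. auto_derive. auto. }
    assert (E4 := eq_trans (eq_sym E) E3). unfold opp in E4; simpl in E4. lra. }
  apply int_from_minf_eq.
  - intros b Hb. apply ex_RInt_cont; intros; apply phi_cont.
  - intros eps He. destruct (M_facts a) as [HM _].
    apply (LimP_affine _ _ 0 (phi a)) in HM. destruct (HM eps He) as [B HB].
    exists (a - Rmax B 0). intros b Hb. assert (h1 := Rmax_l B 0). assert (h2 := Rmax_r B 0).
    rewrite Hfin by lra.
    specialize (HB (a - b) ltac:(lra)). rewrite !Rplus_0_l in HB. exact HB.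
Qed.

Definition nn (w b : R) : R := w * w + b * w.
Definition EE (w b s : R) : R := (nn w b - 1) * ln (1 + s / w) - w * s.
Definition gA (w b s : R) : R := s * exp (EE w b s).
Definition AA (w b : R) : R := int_to_inf (gA w b) 0.

Lemma EE_G_bound w b s : 1 <= w -> 0 <= b -> 0 <= s ->
  Rabs (EE w b s - (b * s - s * s / 2)) <= (1 + b) * (s + s * s + s * s * s) / w.
Proof.
  intros Hw Hb Hs.
  set (x := s / w).
  assert (Hx : 0 <= x) by (unfold x; apply Rdiv_le_0_compat; lra).
  assert (Hsx : s = w * x) by (unfold x; field; lra).
  assert (L1 := ln_ge_2 x Hx). assert (L2 := ln_le_3 x Hx).
  set (r := ln (1 + x) - (x - x * x / 2)).
  assert (Hr0 : 0 <= r) by (unfold r; lra).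
  assert (Hr1 : r <= x * x * x / 3) by (unfold r; lra).
  assert (Hdiff : EE w b s - (b * s - s * s / 2) = - x - b * w * x * x / 2 + x * x / 2 + (nn w b - 1) * r).
  { unfold EE. fold x. replace (ln (1 + x)) with (x - x * x / 2 + r) by (unfold r; ring).
    rewrite Hsx. unfold nn. field. }
  assert (Hrhs : (1 + b) * (s + s * s + s * s * s) / w = (1 + b) * (x + w * x * x + w * w * x * x * x)).
  { rewrite Hsx. field. lra. }
  rewrite Hdiff, Hrhs. clearbody x r.
  assert (Hn1 : 0 <= nn w b - 1) by (unfold nn; nra).
  assert (P1 : 0 <= (nn w b - 1) * r) by (apply Rmult_le_pos; lra).
  assert (P2 : (nn w b - 1) * r <= (nn w b) * (x * x * x / 3)).
  { apply Rle_trans with (nn w b * r). nra. apply Rmult_le_compat_l; [unfold nn; nra|lra]. }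
  assert (Hx2 : 0 <= x * x) by nra. assert (Hx3 : 0 <= x * x * x) by nra.
  assert (Hbw : 0 <= b * w) by nra.
  apply Rabs_le. split.
  - assert (b * w * x * x <= (1 + b) * w * x * x) by nra.
    assert (0 <= (1 + b) * w * w * x * x * x) by (repeat apply Rmult_le_pos; lra).
    assert (0 <= b * x) by nra. assert (0 <= b * w * x * x) by (repeat apply Rmult_le_pos; lra). lra.
  - unfold nn in *.
    assert (x * x / 2 <= w * x * x) by nra.
    assert ((w * w + b * w) * (x * x * x / 3) <= (1 + b) * (w * w * x * x * x)).
    { assert (b * w <= b * w * w) by nra. nra. }
    assert (0 <= b * x) by nra. assert (0 <= b * w * x * x) by (repeat apply Rmult_le_pos; lra). lra.
Qed.

Lemma gA_cont w b s : 0 < w -> 0 <= s -> continuous (gA w b) s.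
Proof.
  intros Hw Hs. apply cont_of_ex_derive. unfold gA, EE. auto_derive.
  assert (0 <= s / w) by (apply Rdiv_le_0_compat; lra). unfold Rdiv in *. lra.
Qed.

Lemma gA_nonneg w b s : 0 <= s -> 0 <= gA w b s.
Proof. intro Hs. unfold gA. apply Rmult_le_pos; [lra|left; apply exp_pos]. Qed.

Lemma s_exp s : 0 <= s -> s * exp (- s) <= 2 * exp (- (1 / 2) * s).
Proof.
  intro Hs. assert (H := exp_ineq1_le (s / 2)).
  replace (exp (- s)) with (exp (- (1 / 2) * s) * exp (- (1 / 2) * s)) by (rewrite <- exp_plus; f_equal; field).
  replace (exp (- (1 / 2) * s)) with (/ exp (s / 2)) by (rewrite <- exp_Ropp; f_equal; field).
  assert (Hy : 0 < exp (s / 2)) by apply exp_pos.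
  set (y := exp (s / 2)) in *. clearbody y.
  replace (s * (/ y * / y)) with ((s / y) * / y) by (field; lra).
  apply Rmult_le_compat_r; [left; apply Rinv_0_lt_compat; lra|].
  apply (Rmult_le_reg_r y); [lra|]. replace (s / y * y) with s by (field; lra). lra.
Qed.

Lemma EE_glob w b s : 4 <= w -> 0 <= b -> 0 <= s ->
  EE w b s <= (w * w / 2 + (nn w b - 1) * (ln (2 * (nn w b - 1) / (w * w)) - 1)) - w * s / 2.
Proof.
  intros Hw Hb Hs.
  set (k := 2 * (nn w b - 1) / (w * w)).
  assert (Hn : 1 < nn w b) by (unfold nn; nra).
  assert (Hk : 0 < k) by (unfold k; apply Rdiv_lt_0_compat; nra).
  assert (Hx : 0 <= s / w) by (apply Rdiv_le_0_compat; lra).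
  assert (L := ln_le_k (1 + s / w) k ltac:(lra) Hk).
  assert (L2 : (nn w b - 1) * ln (1 + s / w) <= (nn w b - 1) * ((1 + s / w) / k + ln k - 1)).
  { apply Rmult_le_compat_l; lra. }
  assert (E1 : (nn w b - 1) * ((1 + s / w) / k + ln k - 1) = w * w / 2 + w * s / 2 + (nn w b - 1) * (ln k - 1)).
  { unfold k. field. split; lra. }
  unfold EE. lra.
Qed.

Lemma gA_glob w b s : 4 <= w -> 0 <= b -> 0 <= s ->
  gA w b s <= exp (w * w / 2 + (nn w b - 1) * (ln (2 * (nn w b - 1) / (w * w)) - 1)) * exp (- (1) * s).
Proof.
  intros Hw Hb Hs. set (C0 := w * w / 2 + (nn w b - 1) * (ln (2 * (nn w b - 1) / (w * w)) - 1)).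
  assert (H := EE_glob w b s Hw Hb Hs). fold C0 in H.
  unfold gA. assert (s <= exp s) by (assert (h := exp_ineq1_le s); lra).
  apply Rle_trans with (exp s * exp (EE w b s)).
  { apply Rmult_le_compat_r; [left; apply exp_pos|auto]. }
  rewrite <- !exp_plus. apply exp_le. nra.
Qed.

Lemma gA_tail w b K s : 0 <= b <= K -> 8 * (K + 1) <= w -> 8 * (K + 1) <= s ->
  gA w b s <= 2 * exp (- (1 / 2) * s).
Proof.
  intros Hb Hw Hs.
  assert (HK : 0 <= K) by lra.
  assert (Hw0 : 0 < w) by lra.
  set (x := s / w).
  assert (Hx : 0 <= x) by (unfold x; apply Rdiv_le_0_compat; lra).
  assert (Hsx : s = w * x) by (unfold x; field; lra).
  assert (L := ln_le_frac x Hx).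
  assert (Hn : w * w / 2 <= nn w b - 1) by (unfold nn; nra). assert (Hww : 0 <= w * w) by nra.
  assert (HEE : EE w b s <= - s).
  { unfold EE. fold x.
    assert (L2 : (nn w b - 1) * ln (1 + x) <= (nn w b - 1) * (x - x * x / (2 * (1 + x)))).
    { apply Rmult_le_compat_l; lra. }
    assert (Q : (K + 1) * s <= (nn w b - 1) * (x * x / (2 * (1 + x)))).
    { apply Rle_trans with (w * w / 2 * (x * x / (2 * (1 + x)))).
      2:{ apply Rmult_le_compat_r; [apply Rdiv_le_0_compat; nra|lra]. }
      replace (w * w / 2 * (x * x / (2 * (1 + x)))) with ((s * s) / (4 * (1 + x))) by (rewrite Hsx; field; lra).
      apply (Rmult_le_reg_r (4 * (1 + x))); [lra|].
      replace (s * s / (4 * (1 + x)) * (4 * (1 + x))) with (s * s) by (field; lra).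
      assert (h1 : 8 * (K + 1) * x <= s) by (rewrite Hsx; nra).
      nra. }
    assert (E1 : (nn w b - 1) * x = w * s + b * s - x).
    { rewrite Hsx. unfold nn. field. }
    nra. }
  unfold gA. apply Rle_trans with (s * exp (- s)).
  { apply Rmult_le_compat_l; [lra|apply exp_le; lra]. }
  apply s_exp; lra.
Qed.

Lemma exRA w b c d : 0 < w -> 0 <= c -> 0 <= d -> ex_RInt (gA w b) c d.
Proof.
  intros Hw Hc Hd. apply ex_RInt_cont. intros x Hx. apply gA_cont; auto.
  assert (0 <= Rmin c d) by (apply Rmin_glb; lra). lra.
Qed.

Lemma AA_facts w b : 4 <= w -> 0 <= b ->
  LimP (fun c => RInt (gA w b) 0 c) (AA w b) /\ (forall c, 0 <= c -> RInt (gA w b) 0 c <= AA w b).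
Proof.
  intros Hw Hb.
  destruct (conv_int (gA w b) 0 (exp (w * w / 2 + (nn w b - 1) * (ln (2 * (nn w b - 1) / (w * w)) - 1))) 1)
    as [H1 [H2 _]]; try lra.
  - left; apply exp_pos.
  - intros; apply gA_cont; lra.
  - intros; apply gA_nonneg; lra.
  - intros; apply gA_glob; lra.
  - split; auto.
Qed.

Lemma AA_tail w b K T : 0 <= b <= K -> 8 * (K + 1) <= w -> 8 * (K + 1) <= T ->
  AA w b <= RInt (gA w b) 0 T + 4 * exp (- (1 / 2) * T).
Proof.
  intros Hb Hw HT.
  destruct (conv_int (gA w b) (8 * (K + 1)) 2 (1 / 2)) as [_ [_ H3]]; try lra.
  - intros; apply gA_cont; lra.
  - intros; apply gA_nonneg; lra.
  - intros; apply (gA_tail w b K); lra.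
  - specialize (H3 T HT). replace (2 / (1 / 2)) with 4 in H3 by field. exact H3.
Qed.

Lemma AA_lower w b : 12 <= w -> 0 <= b -> (4 + b) / 48 <= AA w b.
Proof.
  intros Hw Hb.
  destruct (AA_facts w b ltac:(lra) Hb) as [_ H]. eapply Rle_trans; [|apply (H 1); lra].
  assert (E := RInt_Chasles (gA w b) 0 (1/2) 1 (exRA w b 0 (1/2) ltac:(lra) ltac:(lra) ltac:(lra))
                 (exRA w b (1/2) 1 ltac:(lra) ltac:(lra) ltac:(lra))).
  unfold plus in E; simpl in E.
  assert (E0 : 0 <= RInt (gA w b) 0 (1/2)).
  { apply RInt_ge_0; [lra|apply exRA; lra|]. intros; apply gA_nonneg; lra. }
  set (v := exp (b / 4 - 3 / 4)).
  assert (Hv : (4 + b) / 12 <= v).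
  { unfold v. replace (b / 4 - 3 / 4) with (b / 4 + - (3 / 4)) by ring. rewrite exp_plus.
    assert (h1 := exp_ineq1_le (b / 4)).
    assert (h2 : exp (3 / 4) <= 3) by (apply Rle_trans with (exp 1); [apply exp_le; lra|apply exp_le_3]).
    rewrite exp_Ropp. assert (h3 := exp_pos (3/4)).
    assert (/ 3 <= / exp (3 / 4)) by (apply Rinv_le_contravar; lra).
    assert (0 <= exp (b / 4)) by (left; apply exp_pos).
    assert (exp (b / 4) * / 3 <= exp (b / 4) * / exp (3 / 4)) by (apply Rmult_le_compat_l; lra).
    lra. }
  assert (E1 : RInt (fun _ => 1 / 2 * v) (1/2) 1 <= RInt (gA w b) (1/2) 1).
  { apply RInt_le; [lra|apply ex_RInt_const|apply exRA; lra|].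
    intros s Hs. unfold gA, v.
    assert (Hb2 := EE_G_bound w b s ltac:(lra) Hb ltac:(lra)).
    assert (h := Rle_abs (- (EE w b s - (b * s - s * s / 2)))). rewrite Rabs_Ropp in h.
    assert (Hq : (1 + b) * (s + s * s + s * s * s) / w <= (1 + b) / 4).
    { apply (Rmult_le_reg_r w); [lra|]. replace ((1 + b) * (s + s * s + s * s * s) / w * w) with ((1 + b) * (s + s * s + s * s * s)) by (field; lra).
      assert (s + s * s + s * s * s <= 3) by nra. nra. }
    assert (HE : b / 4 - 3 / 4 <= EE w b s) by nra.
    assert (exp (b / 4 - 3 / 4) <= exp (EE w b s)) by (apply exp_le; exact HE).
    assert (0 <= exp (b / 4 - 3 / 4)) by (left; apply exp_pos).
    nra. }
  rewrite RInt_const in E1. unfold scal in E1; simpl in E1; unfold mult in E1; simpl in E1.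
  lra.
Qed.

Definition fA (w b : R) : R -> R :=
  fun t => t * exp (- (w * w) * t) * Rpower (1 + t) (w * w + b * w - 1).

Lemma fA_scale w b c : 0 < w -> 0 <= c ->
  RInt (fA w b) 0 c = RInt (gA w b) 0 (c * w) / (w * w).
Proof.
  intros Hw Hc.
  assert (Hex : ex_RInt (fA w b) (/ w * 0 + 0) (/ w * (c * w) + 0)).
  { replace (/ w * 0 + 0) with 0 by ring. replace (/ w * (c * w) + 0) with c by (field; lra).
    apply ex_RInt_cont. intros x Hx. rewrite Rmin_left in Hx by lra.
    apply cont_of_ex_derive. unfold fA, Rpower. auto_derive. lra. }
  assert (E := @RInt_comp_lin R_CompleteNormedModule (fA w b) (/ w) 0 0 (c * w) Hex).
  replace (/ w * 0 + 0) with 0 in E by ring. replace (/ w * (c * w) + 0) with c in E by (field; lra).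
  match type of E with ?L = _ => assert (E3 : L = / (w * w) * RInt (gA w b) 0 (c * w)) end.
  { transitivity (RInt (fun y => / (w * w) * gA w b y) 0 (c * w)).
    - apply RInt_ext. intros x _. unfold scal; simpl; unfold mult; simpl. unfold fA, gA, Rpower, EE, nn.
      replace (/ w * x + 0) with (x / w) by (field; lra).
      replace ((w * w + b * w - 1) * ln (1 + x / w) - w * x) with (- (w * w) * (x / w) + (w * w + b * w - 1) * ln (1 + x / w)) by (field; lra).
      rewrite exp_plus. field. lra.
    - apply RInt_scal_R. apply exRA; nra. }
  rewrite <- E, E3. match goal with |- ?u = ?v => change (@eq R u v) end. unfold Rdiv. ring.
Qed.

Lemma alpha_eq w b : 4 <= w -> 0 <= b -> alpha_tilde b (w * w) = Rmin 1 (/ AA w b).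
Proof.
  intros Hw Hb. unfold alpha_tilde, alpha_bar.
  rewrite sqrt_square by lra.
  change (fun t => t * exp (- (w * w) * t) * Rpower (1 + t) (w * w + b * w - 1)) with (fA w b).
  rewrite (int_to_inf_eq (fA w b) 0 (AA w b / (w * w))).
  - f_equal. f_equal. field. lra.
  - intros c Hc. apply ex_RInt_cont. intros x Hx. rewrite Rmin_left in Hx by lra.
    apply cont_of_ex_derive. unfold fA, Rpower. auto_derive. lra.
  - destruct (AA_facts w b Hw Hb) as [HL _].
    apply (LimP_affine _ _ 0 (/ (w * w))) in HL.
    intros eps He. destruct (HL eps He) as [B HB]. exists (Rmax (B / w) 0). intros c Hc.
    assert (h1 := Rmax_l (B / w) 0). assert (h2 := Rmax_r (B / w) 0).
    rewrite fA_scale by lra.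
    assert (HBc : B <= c * w).
    { apply (Rmult_le_reg_r (/ w)). apply Rinv_0_lt_compat; lra.
      replace (c * w * / w) with c by (field; lra). unfold Rdiv in h1. lra. }
    specialize (HB (c * w) HBc). unfold Rdiv. rewrite Rmult_comm, (Rmult_comm (AA w b)). 
    rewrite !Rplus_0_l in HB. exact HB.
Qed.

Lemma exp_diff_abs x y : Rabs (exp x - exp y) <= Rabs (x - y) * exp (y + Rabs (x - y)).
Proof.
  destruct (Rle_dec y x) as [h|h].
  - rewrite (Rabs_pos_eq (x - y)) by lra.
    assert (H := exp_diff_le x y).
    assert (exp y <= exp x) by (apply exp_le; lra).
    rewrite Rabs_pos_eq by lra. replace (y + (x - y)) with x by ring. exact H.
  - rewrite (Rabs_left1 (x - y)) by lra.
    assert (H := exp_diff_le y x).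
    assert (exp x <= exp y) by (apply exp_le; lra).
    rewrite Rabs_left1 by lra.
    assert (exp y <= exp (y + - (x - y))) by (apply exp_le; lra).
    assert (0 <= y - x) by lra.
    assert ((y - x) * exp y <= (y - x) * exp (y + - (x - y))) by (apply Rmult_le_compat_l; lra).
    lra.
Qed.

Lemma gN_tail b K s : 0 <= b <= K -> 2 * (K + 1) <= s -> gN b s <= 2 * exp (- (1 / 2) * s).
Proof.
  intros Hb Hs. unfold gN. apply Rle_trans with (s * exp (- s)).
  { apply Rmult_le_compat_l; [lra|]. apply exp_le. nra. }
  apply s_exp; lra.
Qed.

Lemma N_tail b K T : 0 <= b <= K -> 2 * (K + 1) <= T -> Nf b <= RInt (gN b) 0 T + 4 * exp (- (1 / 2) * T).
Proof.
  intros Hb HT.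
  destruct (conv_int (gN b) (2 * (K + 1)) 2 (1 / 2)) as [HL [_ H3]]; try lra.
  - intros; apply gN_cont.
  - intros; unfold gN; apply Rmult_le_pos; [lra|left; apply exp_pos].
  - intros; apply (gN_tail b K); lra.
  - specialize (H3 T HT). replace (2 / (1 / 2)) with 4 in H3 by field. exact H3.
Qed.

Lemma AA_N_close w b K T : 0 <= b <= K -> 8 * (K + 1) <= T -> 8 * (K + 1) <= w -> 4 <= w ->
  (1 + K) * (T + T * T + T * T * T) <= w ->
  Rabs (AA w b - Nf b) <= 8 * exp (- (1 / 2) * T) + T * (T * ((1 + K) * (T + T * T + T * T * T) / w * exp (K * T + 1))).
Proof.
  intros Hb HT Hw Hw4 Hc.
  set (c1 := (1 + K) * (T + T * T + T * T * T)).
  assert (HT0 : 0 <= T) by lra.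
  assert (Ha1 : RInt (gA w b) 0 T <= AA w b) by (apply (proj2 (AA_facts w b Hw4 ltac:(lra))); lra).
  assert (Ha2 := AA_tail w b K T Hb Hw HT).
  assert (Hn1 : RInt (gN b) 0 T <= Nf b) by (apply (proj2 (N_facts b)); lra).
  assert (Hn2 := N_tail b K T Hb ltac:(lra)).
  assert (Hmid : Rabs (RInt (gA w b) 0 T - RInt (gN b) 0 T) <= T * (T * (c1 / w * exp (K * T + 1)))).
  { replace (RInt (gA w b) 0 T - RInt (gN b) 0 T) with (RInt (gA w b) 0 T + (-1) * RInt (gN b) 0 T) by ring.
    rewrite <- (RInt_lin (gA w b) (gN b) (-1) 0 T (exRA w b 0 T ltac:(lra) ltac:(lra) HT0) (exRN _ _ _)).
    assert (Hex : ex_RInt (fun x => gA w b x + -1 * gN b x) 0 T).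
    { apply ex_RInt_lin; [apply exRA; lra|apply exRN]. }
    replace (T * (T * (c1 / w * exp (K * T + 1)))) with ((T - 0) * (T * (c1 / w * exp (K * T + 1)))) by ring.
    apply (abs_RInt_le_const _ 0 T _ HT0 Hex).
    intros s Hs. unfold gA, gN.
    replace (s * exp (EE w b s) + -1 * (s * exp (b * s - s * s / 2))) with (s * (exp (EE w b s) - exp (b * s - s * s / 2))) by ring.
    rewrite Rabs_mult, (Rabs_pos_eq s) by lra.
    assert (Hd := exp_diff_abs (EE w b s) (b * s - s * s / 2)).
    assert (Hb2 := EE_G_bound w b s ltac:(lra) ltac:(lra) ltac:(lra)).
    assert (Hq : (1 + b) * (s + s * s + s * s * s) / w <= c1 / w).
    { unfold Rdiv. apply Rmult_le_compat_r; [left; apply Rinv_0_lt_compat; lra|]. unfold c1.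
      assert (s * s <= T * T) by nra. assert (s * s * s <= T * T * T) by nra.
      assert (0 <= s * s) by nra. assert (0 <= s * s * s) by nra.
      apply Rmult_le_compat; lra. }
    assert (Hc1 : c1 / w <= 1).
    { apply (Rmult_le_reg_r w); [lra|]. replace (c1 / w * w) with c1 by (field; lra). unfold c1. lra. }
    assert (Hexp : exp (b * s - s * s / 2 + Rabs (EE w b s - (b * s - s * s / 2))) <= exp (K * T + 1)).
    { apply exp_le. assert (b * s <= K * T) by nra. nra. }
    assert (0 <= Rabs (EE w b s - (b * s - s * s / 2))) by apply Rabs_pos.
    assert (Hpos : 0 <= exp (b * s - s * s / 2 + Rabs (EE w b s - (b * s - s * s / 2)))) by (left; apply exp_pos).
    assert (H1 : Rabs (EE w b s - (b * s - s * s / 2)) * exp (b * s - s * s / 2 + Rabs (EE w b s - (b * s - s * s / 2)))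
                 <= c1 / w * exp (K * T + 1)) by (apply Rmult_le_compat; lra).
    assert (0 <= Rabs (exp (EE w b s) - exp (b * s - s * s / 2))) by apply Rabs_pos.
    apply Rmult_le_compat; lra. }
  unfold c1 in Hmid.
  assert (h := Rle_abs (RInt (gA w b) 0 T - RInt (gN b) 0 T)).
  assert (h' := Rle_abs (- (RInt (gA w b) 0 T - RInt (gN b) 0 T))). rewrite Rabs_Ropp in h'.
  assert (0 < exp (- (1 / 2) * T)) by apply exp_pos. unfold c1. apply Rabs_le. split; lra.
Qed.

Lemma h_nonneg u : 0 <= u -> 0 <= (1 + u) * ln (1 + u) - u.
Proof.
  intro Hx. assert (H := nonneg_from_deriv (fun u => (1 + u) * ln (1 + u) - u) (fun u => ln (1 + u))).
  simpl in H. rewrite Rplus_0_r, ln_1 in H.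
  assert (1 * 0 - 0 <= (1 + u) * ln (1 + u) - u); [|lra].
  apply H; auto.
  - intros y Hy. auto_derive; [lra|]. field; lra.
  - intros y Hy. rewrite <- ln_1. destruct (Req_dec y 0) as [->|h]; [rewrite Rplus_0_r; lra|].
    left; apply ln_increasing; lra.
Qed.

Definition aa (w b : R) : R :=
  sqrt (- 2 * (w * w + b * w) * (1 - (w * w) / (w * w + b * w) + ln ((w * w) / (w * w + b * w)))).

Lemma aa_facts w b : 0 < w -> 0 <= b -> 0 <= aa w b /\ aa w b <= b /\ b - aa w b <= b * b / (3 * w).
Proof.
  intros Hw Hb.
  set (u := b / w).
  assert (Hu : 0 <= u) by (unfold u; apply Rdiv_le_0_compat; lra).
  assert (Hbu : b = w * u) by (unfold u; field; lra).
  assert (Hn : w * w + b * w = w * w * (1 + u)) by (rewrite Hbu; ring).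
  assert (Hww : 0 < w * w) by nra.
  assert (Hr : w * w / (w * w + b * w) = / (1 + u)) by (rewrite Hn; field; lra).
  assert (Hl : ln (w * w / (w * w + b * w)) = - ln (1 + u)) by (rewrite Hr; apply ln_Rinv; lra).
  set (X := - 2 * (w * w + b * w) * (1 - (w * w) / (w * w + b * w) + ln ((w * w) / (w * w + b * w)))).
  assert (HX : X = 2 * (w * w) * ((1 + u) * ln (1 + u) - u)).
  { unfold X. rewrite Hl, Hr, Hn. field. lra. }
  assert (H0 := h_nonneg u Hu). assert (H1 := h_upper u Hu). assert (H2 := h_lower u Hu).
  assert (HX0 : 0 <= X) by (rewrite HX; apply Rmult_le_pos; lra).
  assert (HXb : X <= b * b).
  { rewrite HX, Hbu. assert (2 * (w * w) * ((1 + u) * ln (1 + u) - u) <= 2 * (w * w) * (u * u / 2)) by (apply Rmult_le_compat_l; lra). nra. }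
  assert (HXl : b * b - b * b * b / (3 * w) <= X).
  { rewrite HX. replace (b * b - b * b * b / (3 * w)) with (2 * (w * w) * (u * u / 2 - u * u * u / 6)) by (rewrite Hbu; field; lra).
    apply Rmult_le_compat_l; lra. }
  unfold aa. fold X.
  assert (Hs0 := sqrt_pos X).
  assert (Hsq : sqrt X * sqrt X = X) by (apply sqrt_sqrt; lra).
  assert (Hle : sqrt X <= b).
  { rewrite <- (sqrt_square b) by lra. apply sqrt_le_1_alt. exact HXb. }
  split; [lra|split; [lra|]].
  destruct (Req_dec b 0) as [Hb0|Hb0].
  - rewrite Hb0 in *. replace (0 * 0 / (3 * w)) with 0 by (field; lra). lra.
  - assert (Hbp : 0 < b) by lra.
    assert ((b - sqrt X) * (b + sqrt X) <= b * b * b / (3 * w)) by nra.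
    assert (0 <= b * b / (3 * w)) by (apply Rdiv_le_0_compat; nra).
    apply (Rmult_le_reg_r b); [lra|].
    replace (b * b / (3 * w) * b) with (b * b * b / (3 * w)) by (field; lra).
    assert (0 <= b - sqrt X) by lra.
    assert ((b - sqrt X) * b <= (b - sqrt X) * (b + sqrt X)) by (apply Rmult_le_compat_l; lra).
    lra.
Qed.

Definition BB (w b : R) : R :=
  let n := w * w + b * w in
  w * w / n + (n - w * w) / sqrt n * (Mf (aa w b) + 2 / (3 * sqrt n)).

Lemma UB_eq w b : 0 < w -> 0 <= b -> UB b (w * w) = / BB w b.
Proof.
  intros Hw Hb. unfold UB, BB. cbv zeta.
  rewrite sqrt_square by lra. fold (aa w b).
  rewrite Phi_eq. f_equal. f_equal. f_equal. f_equal.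
  field. apply Rgt_not_eq. apply phi_pos.
Qed.

Lemma BB_facts w b : 2 <= w -> 0 <= b ->
  1 <= BB w b /\ (1 <= b -> b / 2 <= ((w * w + b * w - w * w) / sqrt (w * w + b * w)) * ((w * w + b * w - w * w) / sqrt (w * w + b * w))
                  /\ (w * w + b * w - w * w) / sqrt (w * w + b * w) / 2 <= BB w b).
Proof.
  intros Hw Hb. unfold BB. cbv zeta.
  set (n := w * w + b * w). set (q := sqrt n).
  assert (Hn : w * w <= n) by (unfold n; nra).
  assert (Hq2 : q * q = n) by (unfold q; apply sqrt_sqrt; nra).
  assert (Hqw : w <= q) by (unfold q; rewrite <- (sqrt_square w) by lra; apply sqrt_le_1_alt; lra).
  assert (Hgam : (n - w * w) / q = b * w / q) by (unfold n; field; lra).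
  rewrite Hgam.
  assert (HM : 1 / 2 <= Mf (aa w b)).
  { eapply Rle_trans; [apply M0_ge|apply M_mono]. apply (aa_facts w b); lra. }
  assert (Hg0 : 0 <= b * w / q) by (apply Rdiv_le_0_compat; nra).
  assert (Hq3 : 0 <= 2 / (3 * q)) by (apply Rdiv_le_0_compat; lra).
  assert (HB2 : b * w / q / 2 <= w * w / n + b * w / q * (Mf (aa w b) + 2 / (3 * q))).
  { assert (0 <= w * w / n) by (apply Rdiv_le_0_compat; nra).
    assert (b * w / q * (1 / 2) <= b * w / q * (Mf (aa w b) + 2 / (3 * q))) by (apply Rmult_le_compat_l; lra).
    lra. }
  split.
  - assert (Hk : 1 <= w * w / n + b * w / q / 2).
    { replace (w * w / n + b * w / q / 2) with ((2 * w * w * q + b * w * n) / (2 * n * q)) by (field; split; nra).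
      apply (Rmult_le_reg_r (2 * n * q)); [nra|].
      replace ((2 * w * w * q + b * w * n) / (2 * n * q) * (2 * n * q)) with (2 * w * w * q + b * w * n) by (field; split; nra).
      assert (Hn2 : 2 * q <= n) by nra.
      assert (b * w * (2 * q) <= b * w * n) by (apply Rmult_le_compat_l; nra).
      assert (n * q = w * w * q + b * w * q) by (unfold n; ring). lra. }
    assert (b * w / q * (1 / 2) <= b * w / q * (Mf (aa w b) + 2 / (3 * q))) by (apply Rmult_le_compat_l; lra).
    lra.
  - intro Hb1. split; [|exact HB2].
    replace (b * w / q * (b * w / q)) with (b * b * w * w / n) by (rewrite <- Hq2; field; lra).
    apply (Rmult_le_reg_r n); [nra|]. replace (b * b * w * w / n * n) with (b * b * w * w) by (field; nra).
    unfold n. assert (0 <= b * w * w) by (apply Rmult_le_pos; nra). assert (b * w * w <= b * b * w * w) by nra. assert (0 <= b * b * w) by (apply Rmult_le_pos; nra). assert (b * b * w <= b * b * w * w) by nra. lra.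
Qed.

Lemma Nf_nonneg b : 0 <= Nf b.
Proof. destruct (N_facts b) as [_ H]. specialize (H 0 (Rle_refl 0)). rewrite RInt_point in H. exact H. Qed.

Lemma BB_N_close w b K : 2 <= w -> 0 <= b <= K ->
  Rabs (BB w b - Nf b) <= (2 * K + K * K * Mf K + K * K * K * Nf K) / w.
Proof.
  intros Hw Hb. unfold BB. cbv zeta.
  set (n := w * w + b * w). set (q := sqrt n).
  assert (Hn : w * w <= n) by (unfold n; nra).
  assert (Hq2 : q * q = n) by (unfold q; apply sqrt_sqrt; nra).
  assert (Hqw : w <= q) by (unfold q; rewrite <- (sqrt_square w) by lra; apply sqrt_le_1_alt; lra).
  assert (Hgam : (n - w * w) / q = b * w / q) by (unfold n; field; lra).
  rewrite Hgam. rewrite N_eq.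
  destruct (aa_facts w b ltac:(lra) ltac:(lra)) as [Ha0 [Hab Hba]].
  set (a := aa w b) in *.
  assert (HMa1 : 1 / 2 <= Mf a) by (eapply Rle_trans; [apply M0_ge|apply M_mono; lra]).
  assert (HMa2 : Mf a <= Mf K) by (apply M_mono; lra).
  assert (He1 : Mf b - Mf a <= (b - a) * Nf b) by (assert (h := M_diff a b Hab); lra).
  assert (He0 : 0 <= Mf b - Mf a) by (assert (h := M_mono a b Hab); lra).
  assert (HN0 := Nf_nonneg b). assert (HNK : Nf b <= Nf K) by (apply N_mono; lra).
  assert (Ht1 : 1 - w * w / n = b * w / n) by (unfold n; field; nra).
  assert (Ht1b : b * w / n <= b / w).
  { apply (Rmult_le_reg_r (n * w)); [nra|].
    replace (b * w / n * (n * w)) with (b * w * w) by (field; nra).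
    replace (b / w * (n * w)) with (b * n) by (field; lra). nra. }
  assert (Ht10 : 0 <= b * w / n) by (apply Rdiv_le_0_compat; nra).
  assert (Ht4 : b * w / q * (2 / (3 * q)) = 2 / 3 * (b * w / n)) by (rewrite <- Hq2; field; lra).
  assert (Hd0 : b * w / q <= b).
  { apply (Rmult_le_reg_r q); [lra|]. replace (b * w / q * q) with (b * w) by (field; lra). nra. }
  assert (Hd1 : b - b * w / q <= b * b / w).
  { assert (Hqw2 : q - w <= b / 2).
    { assert ((q - w) * (q + w) = b * w) by (unfold n in Hq2; nra).
      assert ((q - w) * (2 * w) <= b * w) by nra. nra. }
    replace (b - b * w / q) with (b * (q - w) / q) by (field; lra).
    apply (Rmult_le_reg_r (q * w)); [nra|].
    replace (b * (q - w) / q * (q * w)) with (b * (q - w) * w) by (field; lra).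
    replace (b * b / w * (q * w)) with (b * b * q) by (field; lra).
    assert (0 <= q - w) by lra.
    assert (b * (q - w) <= b * (b / 2)) by (apply Rmult_le_compat_l; lra).
    assert (b * (q - w) * w <= b * (b / 2) * q) by (apply Rmult_le_compat; nra). nra. }
  set (gam := b * w / q) in *. set (Ma := Mf a) in *.
  replace (w * w / n + gam * (Ma + 2 / (3 * q)) - (1 + b * Mf b))
    with (- (1 - w * w / n) - (b - gam) * Ma - b * (Mf b - Ma) + gam * (2 / (3 * q))) by ring.
  rewrite Ht1, Ht4.
  set (t := b * w / n) in *.
  assert (X1 : (b - gam) * Ma <= b * b / w * Mf K) by (apply Rmult_le_compat; lra).
  assert (X2 : b * (Mf b - Ma) <= b * (b * b / (3 * w) * Nf K)).
  { apply Rmult_le_compat_l; [lra|]. eapply Rle_trans; [exact He1|].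
    apply Rmult_le_compat; lra. }
  assert (X3 : 0 <= (b - gam) * Ma) by (apply Rmult_le_pos; lra).
  assert (X4 : 0 <= b * (Mf b - Ma)) by (apply Rmult_le_pos; lra).
  assert (Y : b / w + b * b / w * Mf K + b * (b * b / (3 * w)) * Nf K + b / w <= (2 * K + K * K * Mf K + K * K * K * Nf K) / w).
  { assert (HMK : 0 <= Mf K) by lra. assert (HNK0 : 0 <= Nf K) by lra.
    apply (Rmult_le_reg_r w); [lra|].
    replace ((b / w + b * b / w * Mf K + b * (b * b / (3 * w)) * Nf K + b / w) * w)
      with (2 * b + b * b * Mf K + b * b * b / 3 * Nf K) by (field; lra).
    replace ((2 * K + K * K * Mf K + K * K * K * Nf K) / w * w) with (2 * K + K * K * Mf K + K * K * K * Nf K) by (field; lra).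
    assert (b * b <= K * K) by nra. assert (b * b * b <= K * K * K) by nra.
    assert (b * b * Mf K <= K * K * Mf K) by (apply Rmult_le_compat_r; lra).
    assert (b * b * b / 3 * Nf K <= K * K * K * Nf K).
    { apply Rmult_le_compat_r; [lra|]. assert (0 <= b * b * b) by (repeat apply Rmult_le_pos; lra). lra. }
    lra. }
  apply Rabs_le. split; lra.
Qed.

Lemma min_inv_close A B : 0 < A -> 1 <= B -> Rabs (Rmin 1 (/ A) - / B) <= Rabs (A - B).
Proof.
  intros HA HB.
  assert (HiB : 0 < / B) by (apply Rinv_0_lt_compat; lra).
  assert (HiB1 : / B <= 1) by (rewrite <- Rinv_1; apply Rinv_le_contravar; lra).
  destruct (Rle_dec 1 A) as [h|h].
  - rewrite Rmin_right by (rewrite <- Rinv_1; apply Rinv_le_contravar; lra).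
    replace (/ A - / B) with ((B - A) / (A * B)) by (field; lra).
    unfold Rdiv. rewrite Rabs_mult, (Rabs_pos_eq (/ (A * B))) by (left; apply Rinv_0_lt_compat; nra).
    rewrite <- Rabs_Ropp. replace (- (B - A)) with (A - B) by ring.
    assert (/ (A * B) <= 1) by (rewrite <- Rinv_1; apply Rinv_le_contravar; nra).
    assert (0 <= Rabs (A - B)) by apply Rabs_pos. nra.
  - rewrite Rmin_left by (left; apply (Rmult_lt_reg_r A); [lra|]; rewrite Rinv_l; lra).
    rewrite Rabs_pos_eq by lra. rewrite Rabs_left1 by lra.
    assert (1 - / B <= B - 1).
    { apply (Rmult_le_reg_r B); [lra|]. replace ((1 - / B) * B) with (B - 1) by (field; lra). nra. }
    lra.
Qed.

Lemma core eps : 0 < eps -> exists Lam, forall lam, Lam <= lam -> forall b, 0 <= b ->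
  0 <= alpha_tilde b lam <= 1 /\ 0 <= UB b lam <= 1 /\ Rabs (alpha_tilde b lam - UB b lam) <= eps.
Proof.
  intros He.
  set (K := 96 / eps + 32 / (eps * eps) + 1).
  assert (HK1 : 96 / eps <= K - 1) by (unfold K; assert (0 < 32 / (eps * eps)) by (apply Rdiv_lt_0_compat; nra); lra).
  assert (HK2 : 32 / (eps * eps) <= K - 1) by (unfold K; assert (0 < 96 / eps) by (apply Rdiv_lt_0_compat; lra); lra).
  assert (HK : 1 <= K) by (assert (0 < 96 / eps) by (apply Rdiv_lt_0_compat; lra); lra).
  destruct (exp_big (1 / 2) 4 (eps / 3) ltac:(lra) ltac:(lra) ltac:(lra) (8 * (K + 1))) as [T [HT1 [HT0 HT3]]].
  specialize (HT3 T (Rle_refl T)). replace (4 / (1 / 2)) with 8 in HT3 by field.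
  set (c1 := (1 + K) * (T + T * T + T * T * T)).
  set (D := 2 * K + K * K * Mf K + K * K * K * Nf K).
  set (G := T * (T * (c1 * exp (K * T + 1)))).
  assert (HMK : 0 <= Mf K) by (assert (h := M0_ge); assert (h' := M_mono 0 K ltac:(lra)); lra).
  assert (HNK : 0 <= Nf K) by apply Nf_nonneg.
  assert (HD : 0 <= D) by (unfold D; assert (0 <= K * K * Mf K) by (repeat apply Rmult_le_pos; lra);
                           assert (0 <= K * K * K * Nf K) by (repeat apply Rmult_le_pos; lra); lra).
  assert (Hc1 : 0 <= c1) by (unfold c1; assert (0 <= T * T) by nra; assert (0 <= T * T * T) by (repeat apply Rmult_le_pos; lra); apply Rmult_le_pos; lra).
  assert (HG : 0 <= G) by (unfold G; assert (0 < exp (K * T + 1)) by apply exp_pos; apply Rmult_le_pos; [lra|apply Rmult_le_pos; [lra|apply Rmult_le_pos; [exact Hc1|lra]]]).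
  set (W := 8 * (K + 1) + 12 + c1 + 3 * G / eps + 3 * D / eps).
  assert (HW3G : 0 <= 3 * G / eps) by (apply Rdiv_le_0_compat; lra).
  assert (HW3D : 0 <= 3 * D / eps) by (apply Rdiv_le_0_compat; lra).
  exists (W * W). intros lam Hlam b Hb.
  assert (HW0 : 12 <= W) by (unfold W; lra).
  set (w := sqrt lam).
  assert (Hlam0 : 0 <= lam) by nra.
  assert (Hwl : lam = w * w) by (unfold w; rewrite sqrt_sqrt; lra).
  assert (HwW : W <= w) by (unfold w; rewrite <- (sqrt_square W) by lra; apply sqrt_le_1_alt; lra).
  rewrite Hwl. clearbody w.
  rewrite (alpha_eq w b) by lra. rewrite (UB_eq w b) by lra.
  assert (HAl := AA_lower w b ltac:(lra) Hb).
  assert (HA0 : 0 < AA w b) by lra.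
  destruct (BB_facts w b ltac:(lra) Hb) as [HB1 HB2].
  assert (HiA : 0 < / AA w b) by (apply Rinv_0_lt_compat; lra).
  assert (HiB : 0 < / BB w b) by (apply Rinv_0_lt_compat; lra).
  assert (HiB1 : / BB w b <= 1) by (rewrite <- Rinv_1; apply Rinv_le_contravar; lra).
  assert (Hm1 : 0 <= Rmin 1 (/ AA w b) <= 1) by (split; [apply Rmin_glb; lra|apply Rmin_l]).
  split; [exact Hm1|]. split; [lra|].
  destruct (Rle_dec b K) as [hbK|hbK].
  -
    eapply Rle_trans; [apply min_inv_close; lra|].
    assert (Hcw : c1 <= w) by (unfold W in HwW; lra). unfold c1 in Hcw.
    assert (H8 : 8 * (K + 1) <= w) by (unfold W in HwW; lra).
    assert (E1 := AA_N_close w b K T ltac:(lra) HT1 ltac:(lra) ltac:(lra) Hcw).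
    assert (E2 := BB_N_close w b K ltac:(lra) ltac:(lra)). fold D in E2.
    replace (AA w b - BB w b) with ((AA w b - Nf b) - (BB w b - Nf b)) by ring.
    eapply Rle_trans; [apply Rabs_triang|]. rewrite Rabs_Ropp.
    assert (Hw0 : 0 < w) by lra.
    assert (E3 : T * (T * ((1 + K) * (T + T * T + T * T * T) / w * exp (K * T + 1))) = G / w).
    { unfold G, c1. field. lra. }
    rewrite E3 in E1.
    assert (G / w <= eps / 3).
    { apply (Rmult_le_reg_r w); [lra|]. replace (G / w * w) with G by (field; lra).
      assert (HGw : 3 * G / eps <= w) by (unfold W in HwW; lra).
      apply (Rmult_le_compat_r (eps / 3)) in HGw; [|lra].
      replace (3 * G / eps * (eps / 3)) with G in HGw by (field; lra). lra. }
    assert (D / w <= eps / 3).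
    { apply (Rmult_le_reg_r w); [lra|]. replace (D / w * w) with D by (field; lra).
      assert (HDw : 3 * D / eps <= w) by (unfold W in HwW; lra).
      apply (Rmult_le_compat_r (eps / 3)) in HDw; [|lra].
      replace (3 * D / eps * (eps / 3)) with D in HDw by (field; lra). lra. }
    lra.
  -
    assert (HbK : K < b) by lra.
    assert (Ha : Rmin 1 (/ AA w b) <= eps / 2).
    { eapply Rle_trans; [apply Rmin_r|].
      apply Rle_trans with (/ ((4 + b) / 48)).
      { apply Rinv_le_contravar; [apply Rdiv_lt_0_compat; lra|lra]. }
      replace (/ ((4 + b) / 48)) with (48 / (4 + b)) by (field; lra).
      apply (Rmult_le_reg_r (4 + b)); [lra|]. replace (48 / (4 + b) * (4 + b)) with 48 by (field; lra).
      assert (96 / eps * eps = 96) by (field; lra).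
      assert (96 / eps * eps <= b * eps) by (apply Rmult_le_compat_r; lra). nra. }
    destruct (HB2 ltac:(lra)) as [Hg2 HgB].
    set (gam := (w * w + b * w - w * w) / sqrt (w * w + b * w)) in *.
    assert (Hgam0 : 0 < gam).
    { unfold gam. apply Rdiv_lt_0_compat; [nra|]. apply sqrt_lt_R0. nra. }
    assert (Hu : / BB w b <= eps / 2).
    { apply Rle_trans with (2 / gam).
      { replace (2 / gam) with (/ (gam / 2)) by (field; lra). apply Rinv_le_contravar; lra. }
      assert (Hq : 32 / (eps * eps) * (eps * eps) = 32) by (field; lra).
      assert (32 / (eps * eps) * (eps * eps) <= b * (eps * eps)) by (apply Rmult_le_compat_r; nra).
      assert (16 <= gam * gam * (eps * eps)) by nra.
      assert (Hp : 16 <= (gam * eps) * (gam * eps)) by (replace ((gam * eps) * (gam * eps)) with (gam * gam * (eps * eps)) by ring; lra).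
      assert (Hp0 : 0 < gam * eps) by nra.
      assert (4 <= gam * eps).
      { destruct (Rle_dec 4 (gam * eps)) as [hh|hh]; [exact hh|].
        assert (gam * eps * (gam * eps) < 4 * 4) by (apply Rmult_le_0_lt_compat; lra). lra. }
      apply (Rmult_le_reg_r gam); [lra|]. replace (2 / gam * gam) with 2 by (field; lra). nra. }
    apply Rabs_le. split; lra.
Qed.

Lemma prodL_bounds L x : (forall i, (i < L)%nat -> 0 <= x i <= 1) -> 0 <= prodL L x <= 1.
Proof.
  induction L as [|k IH]; intros H; simpl; [lra|].
  assert (Hk := H k ltac:(lia)). assert (IH' := IH ltac:(intros i Hi; apply H; lia)).
  split; [apply Rmult_le_pos; lra|]. replace 1 with (1 * 1) by ring. apply Rmult_le_compat; lra.
Qed.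

Lemma prodL_diff L x y : (forall i, (i < L)%nat -> 0 <= x i <= 1 /\ 0 <= y i <= 1) ->
  Rabs (prodL L x - prodL L y) <= sumL L (fun i => Rabs (x i - y i)).
Proof.
  induction L as [|k IH]; intros H; simpl.
  - rewrite Rminus_diag, Rabs_R0. lra.
  - assert (Hk := H k ltac:(lia)).
    assert (IH' := IH ltac:(intros i Hi; apply H; lia)).
    assert (Bx := prodL_bounds k x ltac:(intros i Hi; apply H; lia)).
    assert (By := prodL_bounds k y ltac:(intros i Hi; apply H; lia)).
    replace (prodL k x * x k - prodL k y * y k) with ((prodL k x - prodL k y) * x k + prodL k y * (x k - y k)) by ring.
    eapply Rle_trans; [apply Rabs_triang|]. rewrite !Rabs_mult.
    rewrite (Rabs_pos_eq (x k)) by lra. rewrite (Rabs_pos_eq (prodL k y)) by lra.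
    assert (0 <= Rabs (prodL k x - prodL k y)) by apply Rabs_pos.
    assert (0 <= Rabs (x k - y k)) by apply Rabs_pos.
    assert (Rabs (prodL k x - prodL k y) * x k <= Rabs (prodL k x - prodL k y)).
    { rewrite <- (Rmult_1_r (Rabs _)) at 2. apply Rmult_le_compat_l; lra. }
    assert (prodL k y * Rabs (x k - y k) <= Rabs (x k - y k)).
    { rewrite <- (Rmult_1_l (Rabs (x k - y k))) at 2. apply Rmult_le_compat_r; lra. }
    lra.
Qed.

Lemma sumL_le L f e : (forall i, (i < L)%nat -> f i <= e) -> sumL L f <= INR L * e.
Proof.
  induction L as [|k IH]; intros H; cbn [sumL]; [simpl; lra|].
  assert (IH' := IH ltac:(intros i Hi; apply H; lia)). assert (Hk := H k ltac:(lia)).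
  rewrite S_INR. lra.
Qed.

Lemma unif_N L (P : nat -> nat -> Prop) :
  (forall i, (i < L)%nat -> exists N, forall m, (N <= m)%nat -> P i m) ->
  exists N, forall m, (N <= m)%nat -> forall i, (i < L)%nat -> P i m.
Proof.
  induction L as [|k IH]; intros H.
  - exists O. intros m _ i Hi. lia.
  - destruct (IH ltac:(intros i Hi; apply H; lia)) as [N1 H1].
    destruct (H k ltac:(lia)) as [N2 H2].
    exists (Nat.max N1 N2). intros m Hm i Hi.
    destruct (Nat.eq_dec i k) as [->|hne].
    + apply H2. lia.
    + apply H1; lia.
Qed.

Theorem theorem5 (L : nat) (delta : R) (lam0 : nat -> R) (c : nat -> R -> R)
  (betaF betaG : nat -> nat -> R) :
  (1 <= L)%nat ->
  0 < delta ->
  (forall i, (i < L)%nat -> 0 < lam0 i) ->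
  (forall i, (i < L)%nat -> forall x, 0 <= x ->
     limit1_in (c i) (fun y => 0 <= y) (c i x) x) ->
  (forall i, (i < L)%nat -> forall x y, 0 <= x -> x < y -> c i x < c i y) ->
  (forall m, (1 <= m)%nat -> nonneg_vec L (betaF m) /\
     forall beta, nonneg_vec L beta ->
       f_obj L c delta lam0 m (betaF m) <= f_obj L c delta lam0 m beta) ->
  (forall m, (1 <= m)%nat -> nonneg_vec L (betaG m) /\
     forall beta, nonneg_vec L beta ->
       g_obj L c delta lam0 m (betaG m) <= g_obj L c delta lam0 m beta) ->
  Un_cv (fun m => f_obj L c delta lam0 m (betaG m) - f_obj L c delta lam0 m (betaF m)) 0.
Proof.
  intros HL Hd Hlam _ _ HF HG eps He.
  assert (HLr : 1 <= INR L) by (replace 1 with (INR 1) by reflexivity; apply le_INR; exact HL).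
  set (e' := eps / (4 * delta * INR L)).
  assert (He' : 0 < e') by (unfold e'; apply Rdiv_lt_0_compat; [lra|]; apply Rmult_lt_0_compat; lra).
  destruct (core e' He') as [Lam HLam].
  assert (HU : exists N, forall m, (N <= m)%nat -> forall i, (i < L)%nat -> Lam <= INR m * lam0 i).
  { apply unif_N. intros i Hi.
    destruct (INR_unbounded (Lam / lam0 i)) as [N HN]. exists N. intros m Hm.
    assert (Hl := Hlam i Hi).
    assert (INR N <= INR m) by (apply le_INR; exact Hm).
    apply (Rmult_le_reg_r (/ lam0 i)); [apply Rinv_0_lt_compat; lra|].
    replace (INR m * lam0 i * / lam0 i) with (INR m) by (field; lra). unfold Rdiv in HN. lra. }
  destruct HU as [N HN].
  exists (Nat.max N 1). intros m Hm. unfold R_dist. rewrite Rminus_0_r.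
  assert (Hm1 : (1 <= m)%nat) by lia.
  destruct (HF m Hm1) as [HFn HFmin]. destruct (HG m Hm1) as [HGn HGmin].
  assert (Hclose : forall beta, nonneg_vec L beta ->
    Rabs (f_obj L c delta lam0 m beta - g_obj L c delta lam0 m beta) <= delta * (INR L * e')).
  { intros beta Hbeta. unfold f_obj, g_obj.
    replace (sumL L (fun i => c i (beta i)) + delta * (1 - prodL L (fun i => 1 - alpha_tilde (beta i) (INR m * lam0 i))) -
      (sumL L (fun i => c i (beta i)) + delta * (1 - prodL L (fun i => 1 - UB (beta i) (INR m * lam0 i)))))
      with (delta * (prodL L (fun i => 1 - UB (beta i) (INR m * lam0 i)) - prodL L (fun i => 1 - alpha_tilde (beta i) (INR m * lam0 i)))) by ring.
    rewrite Rabs_mult, (Rabs_pos_eq delta) by lra.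
    apply Rmult_le_compat_l; [lra|].
    eapply Rle_trans; [apply prodL_diff|].
    - intros i Hi. destruct (HLam (INR m * lam0 i) (HN m ltac:(lia) i Hi) (beta i) (Hbeta i Hi)) as [h1 [h2 _]].
      split; lra.
    - apply sumL_le. intros i Hi.
      destruct (HLam (INR m * lam0 i) (HN m ltac:(lia) i Hi) (beta i) (Hbeta i Hi)) as [_ [_ h3]].
      replace (1 - UB (beta i) (INR m * lam0 i) - (1 - alpha_tilde (beta i) (INR m * lam0 i)))
        with (alpha_tilde (beta i) (INR m * lam0 i) - UB (beta i) (INR m * lam0 i)) by ring. exact h3. }
  assert (C1 := Hclose (betaG m) HGn). assert (C2 := Hclose (betaF m) HFn).
  assert (M1 := HFmin (betaG m) HGn). assert (M2 := HGmin (betaF m) HFn).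
  apply Rabs_def2b in C1 || idtac.
  assert (h1 := Rle_abs (f_obj L c delta lam0 m (betaG m) - g_obj L c delta lam0 m (betaG m))).
  assert (h2 := Rle_abs (- (f_obj L c delta lam0 m (betaF m) - g_obj L c delta lam0 m (betaF m)))).
  rewrite Rabs_Ropp in h2.
  assert (Hval : delta * (INR L * e') = eps / 4) by (unfold e'; field; lra).
  rewrite Rabs_pos_eq by lra. lra.
Qed.
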